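(* Assume the standing hypotheses (P) described in the context and let $\epsilon>0$. For every $\eta\in(0,\frac\beta2)$ there exists $\zeta>0$, depending only on $\epsilon$, $\beta$ and $\tilde H(\epsilon)$ (and independent of $n$), such that for every $\phi\in\mathcal H^{pot}(\epsilon)$ that is not $(\frac\beta2-\eta)$-strongly convex it holds that $P^{(\beta/2)}(\phi)\ge\zeta$.
   Context: Let $d\in\mathbb N$; $\lambda$ is the restriction of Lebesgue measure to $[0,1]^d$, $G_{\#}\lambda$ the pushforward. $\mu^*$ is a probability measure on $[0,1]^d$ with Lebesgue density $p^*$, $p^*>0$ on $[0,1]^d$, $p^*=0$ outside. Neural networks with architecture $(l_0,\dots,l_L)$ and activation $\sigma$ realize $x_0\mapsto W_Lx_{L-1}+B_L$, $x_k=\sigma(W_kx_{k-1}+B_k)$; ReCU: $\sigma(x)=\max\{x,0\}^3$. $C^{k,\alpha}$ are Hölder spaces on $[0,1]^d$ with norms $\|\cdot\|_{C^{k,\alpha}}$; $A\ge B$ means $A-B$ positive semidefinite; $d_{JS}$ is the Jensen–Shannon divergence. Hypotheses (P): $p^*\in C^{1,\alpha}([0,1]^d,\mathbb R)$ for some $\alpha\in(0,1)$; $\phi^*\in C^{3,\alpha}([0,1]^d,\mathbb R)$ is the Brenier potential with $\mu^*=(\nabla\phi^* )_{\#}\lambda$; $M\in(1,\infty)$ with $\frac1M\operatorname{Id}\le\operatorname{Hess}\phi^*\le M\operatorname{Id}$ on $[0,1]^d$, and $\beta:=1/M$. For each $\epsilon>0$, $\phi_\epsilon$ is a ReCU network $[0,1]^d\to\mathbb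 R$ with $\frac1{2M}\operatorname{Id}\le\operatorname{Hess}\phi_\epsilon\le2M\operatorname{Id}$ on $[0,1]^d$ and $d_{JS}(\mu^*,(\nabla\phi_\epsilon)_{\#}\lambda)\le\epsilon$, $\mathcal A^\phi(\epsilon)$ is its architecture, $H(\epsilon)=\|\phi_\epsilon\|_{C^{2,1}}$, $\tilde H(\epsilon)\ge H(\epsilon)$ is fixed, and $\mathcal H^{pot}(\epsilon)$ is the set of all ReCU networks $\phi\colon[0,1]^d\to\mathbb R$ with architecture $\mathcal A^\phi(\epsilon)$ and $\|\phi\|_{C^{2,1}([0,1]^d)}\le\tilde H(\epsilon)$. A function $\phi$ on $[0,1]^d$ is $\kappa$-strongly convex if $\phi(\frac{u+u'}2)\le\frac{\phi(u)+\phi(u')}2-\frac\kappa8\|u-u'\|^2$ for all $u,u'\in[0,1]^d$ (equivalently $\phi+\frac\kappa2\|\cdot\|^2$ is convex). For $\kappa>0$ and $\phi\colon[0,1]^d\to\mathbb R$, $P^{(\kappa)}(\phi)=\int_{([0,1]^d)^2}\mathrm{ReLU}\big(\phi(\frac{u+u'}2)-\frac{\phi(u)+\phi(u')}2+\frac\kappa8\|u-u'\|^2\big)\,du\,du'$, where $\mathrm{ReLU}(x)=\max\{x,0\}$. *)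

(* Defs.v *)
From HB Require Import structures.
From mathcomp Require Import all_boot all_order all_algebra.
From mathcomp Require Import all_classical all_reals all_analysis.
Set Implicit Arguments. Unset Strict Implicit. Unset Printing Implicit Defensive.
Import Order.TTheory GRing.Theory Num.Theory.
Import numFieldNormedType.Exports.
Local Open Scope classical_set_scope.
Local Open Scope ring_scope.

Section Defs.
Variable R : realType.

Definition ReCU (x : R) : R := (Num.max x 0) ^+ 3.
Definition ReLU (x : R) : R := Num.max x 0.

Fixpoint hidden_params (l0 : nat) (ls : seq nat) : Type :=
  match ls with
  | [::] => unit
  | l1 :: ls' => ('M[R]_(l1, l0) * 'cV[R]_l1 * hidden_params l1 ls')%type
  end.

Fixpoint hidden_eval (l0 : nat) (ls : seq nat) :
  hidden_params l0 ls -> 'cV[R]_l0 -> 'cV[R]_(last l0 ls) :=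
  match ls return hidden_params l0 ls -> 'cV[R]_l0 -> 'cV[R]_(last l0 ls) with
  | [::] => fun _ x => x
  | l1 :: ls' => fun p x => hidden_eval p.2 (map_mx ReCU (p.1.1 *m x + p.1.2))
  end.

(* A ReCU network R^d -> R with architecture (d, hs_1, ..., hs_{L-1}, 1):
   hidden layers with widths hs, then the affine output layer W_L x + B_L. *)
Record recu_net (d : nat) (hs : seq nat) := RecuNet {
  net_hidden : hidden_params d hs;
  net_WL : 'M[R]_(1, last d hs);
  net_BL : 'cV[R]_1 }.

(* realization x_0 |-> W_L x_{L-1} + B_L (points of R^d are row vectors) *)
Definition realize d hs (N : recu_net d hs) (x : 'rV[R]_d) : R :=
  (net_WL N *m hidden_eval (net_hidden N) x^T + net_BL N) 0 0.

Definition cube (d : nat) : set 'rV[R]_d :=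
  [set x | forall i, 0 <= x 0 i <= 1].

Definition eucl2 d (x : 'rV[R]_d) : R := \sum_(i < d) (x 0 i) ^+ 2.
Definition eucl d (x : 'rV[R]_d) : R := Num.sqrt (eucl2 x).

Definition evec d (i : 'I_d) : 'rV[R]_d := delta_mx 0 i.
Definition partial d (i : 'I_d) (f : 'rV[R]_d -> R) : 'rV[R]_d -> R :=
  fun x => derive f x (evec i).
Definition partial2 d (i j : 'I_d) (f : 'rV[R]_d -> R) : 'rV[R]_d -> R :=
  partial j (partial i f).

Definition hess d (f : 'rV[R]_d -> R) (x : 'rV[R]_d) : 'M[R]_d :=
  \matrix_(i, j) partial2 i j f x.

Definition psd d (A : 'M[R]_d) : Prop := forall v : 'rV[R]_d, 0 <= (v *m A *m v^T) 0 0.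
Definition loewner_le d (A B : 'M[R]_d) : Prop := psd (B - A).

(* C^{2,1}([0,1]^d) norm:
   max_{|g|<=2} sup_{[0,1]^d} |D^g f|  +  max_{|g|=2} Lip_{[0,1]^d}(D^g f) *)
Definition C2sup d (f : 'rV[R]_d -> R) : \bar R :=
  ereal_sup [set r%:E | r in [set r : R | exists x, cube x /\
      (r = `|f x| \/ (exists i, r = `|partial i f x|)
                  \/ (exists i j, r = `|partial2 i j f x|))]].
Definition C21lip d (f : 'rV[R]_d -> R) : \bar R :=
  ereal_sup [set r%:E | r in [set r : R | r = 0 \/ exists x y i j,
      [/\ cube x, cube y, x != y &
          r = `|partial2 i j f x - partial2 i j f y| / eucl (x - y)]]].
Definition C21norm d (f : 'rV[R]_d -> R) : \bar R := (C2sup f + C21lip f)%E.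

(* kappa-strong convexity on [0,1]^d (midpoint form, as in the paper) *)
Definition strongly_convex d (kappa : R) (phi : 'rV[R]_d -> R) : Prop :=
  forall u u', cube u -> cube u' ->
    phi (2^-1 *: (u + u')) <= (phi u + phi u') / 2 - kappa / 8 * eucl2 (u - u').

(* Lebesgue integral over [0,1]^n of a nonnegative function, as an iterated
   integral (Tonelli) with respect to the 1-d Lebesgue measure *)
Fixpoint cube_int (n : nat) : ('rV[R]_n -> \bar R) -> \bar R :=
  match n return ('rV[R]_n -> \bar R) -> \bar R with
  | 0 => fun f => f 0
  | n'.+1 => fun f =>
      (\int[@lebesgue_measure R]_(t in `[0%R, 1%R])
         cube_int (fun v : 'rV[R]_n' => f (row_mx (\row_(_ < 1) t) v)))%E
  end.

Definition Pkappa d (kappa : R) (phi : 'rV[R]_d -> R) : \bar R :=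
  cube_int (fun u : 'rV[R]_d => cube_int (fun u' : 'rV[R]_d =>
    (ReLU (phi (2^-1 *: (u + u')) - (phi u + phi u') / 2
           + kappa / 8 * eucl2 (u - u')))%:E)).

End Defs.

(* Main.v *)
Require Import Defs.
From HB Require Import structures.
From mathcomp Require Import all_boot all_order all_algebra.
From mathcomp Require Import all_classical all_reals all_analysis.
From mathcomp Require Import ring lra.
Import Order.TTheory GRing.Theory Num.Theory.
Import numFieldNormedType.Exports.
Local Open Scope ring_scope.
Local Open Scope classical_set_scope.

Lemma quad_deriv (R : realType) (u : R -> R) (x a K : R) :
  (forall h, `|h| <= 1 -> `|u (x + h) - u x - a * h| <= K * h^+2) ->
  is_derive x 1 u a.
Proof.
move=> H.
have K0 : 0 <= K.
  have := H 1; rewrite normr1 lexx => /(_ isT).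
  rewrite expr1n !mulr1 => HK. exact: le_trans (normr_ge0 _) HK.
have Hc : (fun h : R => h^-1 *: ((u \o shift x) (h *: 1) - u x)) @ 0^' --> a.
  apply/cvgrPdist_le => e e0.
  have e1 : 0 < Num.min 1 (e / (K + 1)) by rewrite lt_min ltr01 /= divr_gt0 // ltr_wpDl.
  near=> h.
  have hn0 : h != 0 by near: h; exact: nbhs_dnbhs_neq.
  have hle : `|h| <= Num.min 1 (e / (K + 1)) by near: h; exact: dnbhs0_le.
  move: hle; rewrite le_min => /andP[h1 he].
  rewrite /= /shift /= scaler1 [h + x]addrC.
  have := H h h1.
  have -> : a - h^-1 * (u (x + h) - u x) = - h^-1 * (u (x + h) - u x - a * h).
    by field.
  rewrite normrM normrN normfV => Hb.
  rewrite ler_pdivrMl ?normr_gt0 //.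
  apply: (le_trans Hb).
  have h2 : h ^+ 2 = `|h| ^+ 2 by rewrite real_normK // num_real.
  rewrite h2.
  have et : e / (K + 1) * (K + 1) = e by rewrite divfK // gt_eqF // ltr_wpDl.
  move: he et; set t := e / (K + 1) => he et.
  rewrite -et.
  have th : 0 <= t - `|h| by rewrite subr_ge0.
  have := mulr_ge0 (mulr_ge0 K0 (normr_ge0 h)) th.
  have := mulr_ge0 (normr_ge0 h) (le_trans (normr_ge0 h) he).
  nra.
split; first exact: (cvgP _ Hc).
exact: cvg_lim Hc.
Unshelve. all: by end_near.
Qed.
Lemma max0_cases {R : realType} (x : R) :
  (0 <= x /\ Num.max x 0 = x) \/ (x < 0 /\ Num.max x 0 = 0).
Proof.
case: (lerP 0 x) => hx.
  by left; split=> //; rewrite max_l.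
by right; split => //; rewrite max_r // ltW.
Qed.

Lemma p2_quad (R : realType) (x h : R) : `|h| <= 1 ->
  `|Num.max (x + h) 0 ^+ 2 - Num.max x 0 ^+ 2 - 2 * Num.max x 0 * h| <= 3 * h ^+ 2.
Proof.
move=> h1; rewrite ler_norml; move: h1; rewrite ler_norml => /andP[ha hb].
case: (max0_cases x) => [[hx ->]|[hx ->]]; case: (max0_cases (x+h)) => [[hy ->]|[hy ->]];
  apply/andP; split; nra.
Qed.

Lemma p3_quad (R : realType) (x h : R) : `|h| <= 1 ->
  `|Num.max (x + h) 0 ^+ 3 - Num.max x 0 ^+ 3 - 3 * Num.max x 0 ^+ 2 * h|
    <= (3 * `|x| + 4) * h ^+ 2.
Proof.
move=> h1; rewrite ler_norml; move: h1; rewrite ler_norml => /andP[ha hb].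
case: (max0_cases x) => [[hx ->]|[hx ->]]; case: (max0_cases (x+h)) => [[hy ->]|[hy ->]].
- rewrite ger0_norm //; apply/andP; split; nra.
- rewrite ger0_norm //; apply/andP; split; nra.
- rewrite ltr0_norm //; apply/andP; split; nra.
- rewrite ltr0_norm //; apply/andP; split; nra.
Qed.

Lemma is_derive_p3 (R : realType) (x : R) :
  is_derive x 1 (fun t => Num.max t 0 ^+ 3) (3 * Num.max x 0 ^+ 2).
Proof. by apply: (@quad_deriv _ _ _ _ (3 * `|x| + 4)) => h h1; exact: (@p3_quad _ x h h1). Qed.

Lemma is_derive_3p2 (R : realType) (x : R) :
  is_derive x 1 (fun t => 3 * Num.max t 0 ^+ 2) (3 * (2 * Num.max x 0)).
Proof.
apply: (@quad_deriv _ _ _ _ 9) => h h1.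
have := @p2_quad _ x h h1.
have -> : 3 * Num.max (x + h) 0 ^+ 2 - 3 * Num.max x 0 ^+ 2 - 3 * (2 * Num.max x 0) * h
  = 3 * (Num.max (x + h) 0 ^+ 2 - Num.max x 0 ^+ 2 - 2 * Num.max x 0 * h) by ring.
rewrite normrM ger0_norm // => H.
have -> : (9 : R) * h ^+ 2 = 3 * (3 * h ^+ 2) by ring.
by rewrite ler_pM2l.
Qed.

Definition C2 {R : realType} {d} (f : 'rV[R]_d -> R) :=
  (forall x, differentiable f x) /\ (forall i x, differentiable (partial i f) x).

Lemma partial_coord (R : realType) d (i j : 'I_d) :
  partial i (fun y : 'rV[R]_d => y 0 j) = fun _ => evec R i 0 j.
Proof.
apply: funext => x; rewrite /partial.
have := @derive_mx R _ 1 d id x (evec R i) (@derivable_id _ _ _ _).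
rewrite derive_id => /matrixP /(_ 0 j); rewrite [X in _ = X]mxE => H.
exact: (esym H).
Qed.

Lemma C2_coord (R : realType) d (j : 'I_d) : C2 (fun y : 'rV[R]_d => y 0 j).
Proof.
split; first by move=> x; exact: differentiable_coord.
by move=> i x; rewrite partial_coord; exact: differentiable_cst.
Qed.

Lemma C2_cst (R : realType) d (c : R) : C2 (fun _ : 'rV[R]_d => c).
Proof.
split; first by move=> x; exact: differentiable_cst.
move=> i x; have -> : partial i (fun _ : 'rV[R]_d => c) = cst 0.
  by apply: funext => y; rewrite /partial derive_cst.
exact: differentiable_cst.
Qed.

Lemma C2_add (R : realType) d (f g : 'rV[R]_d -> R) : C2 f -> C2 g ->
  C2 (fun x => f x + g x).
Proof.
move=> [f1 f2] [g1 g2]; split.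
  by move=> x; exact: (differentiableD (f1 x) (g1 x)).
move=> i x; have -> : partial i (fun x => f x + g x) = partial i f + partial i g.
  apply: funext => y; rewrite /partial.
  by rewrite (deriveD (diff_derivable (f1 y)) (diff_derivable (g1 y))).
exact: differentiableD.
Qed.

Lemma C2_scale (R : realType) d (c : R) (f : 'rV[R]_d -> R) : C2 f ->
  C2 (fun x => c * f x).
Proof.
move=> [f1 f2]; split.
  by move=> x; exact: (differentiableZ c (f1 x)).
move=> i x; have -> : partial i (fun x => c * f x) = c *: partial i f.
  apply: funext => y; rewrite /partial.
  by rewrite (deriveZ c (diff_derivable (f1 y))).
exact: differentiableZ.
Qed.

Lemma C2_sum (R : realType) d n (F : 'I_n -> 'rV[R]_d -> R) :
  (forall k, C2 (F k)) -> C2 (fun x => \sum_(k < n) F k x).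
Proof.
elim: n F => [|n IH] F HF.
  by under eq_fun do rewrite big_ord0; exact: C2_cst.
under eq_fun do rewrite big_ord_recr /=.
apply: C2_add; last exact: HF.
exact: (IH (fun k => F (widen_ord (leqnSn n) k))).
Qed.

Lemma C2_comp (R : realType) d (u u' : R -> R) (f : 'rV[R]_d -> R) :
  (forall y : R, is_derive y 1 u (u' y)) -> (forall y : R, derivable u' y 1) -> C2 f ->
  C2 (fun x => u (f x)).
Proof.
move=> Hu Hu' [f1 f2].
have du y : differentiable u y by apply/derivable1_diffP; exact: (@ex_derive _ _ _ _ _ _ _ (Hu y)).
have du' y : differentiable u' y by apply/derivable1_diffP; exact: Hu'.
have dc x : differentiable (u \o f) x by exact: differentiable_comp.
split; first exact: dc.
move=> i x.
have -> : partial i (fun x => u (f x)) = (partial i f) * (u' \o f).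
  apply: funext => y; rewrite /partial.
  have -> : (fun x => u (f x)) = u \o f by [].
  rewrite (deriveE _ (dc y)) (diff_comp (f1 y) (du (f y))) /=.
  rewrite diff1E // derive1E (@mathcomp.analysis.derive.derive_val _ _ _ _ _ _ _ (Hu (f y))).
  by rewrite -(deriveE _ (f1 y)).
apply: differentiableM; first exact: f2.
exact: differentiable_comp.
Qed.

Lemma C2_recu (R : realType) d (f : 'rV[R]_d -> R) : C2 f -> C2 (fun x => ReCU (f x)).
Proof.
apply: (@C2_comp R d (fun t => Num.max t 0 ^+ 3) (fun t => 3 * Num.max t 0 ^+ 2)).
  by move=> y; exact: is_derive_p3.
by move=> y; exact: (@ex_derive _ _ _ _ _ _ _ (@is_derive_3p2 R y)).
Qed.

Lemma C2_hidden (R : realType) d (ls : seq nat) : forall l0 (p : hidden_params R l0 ls)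
  (g : 'I_l0 -> 'rV[R]_d -> R),
  (forall j, C2 (g j)) -> forall k, C2 (fun x => hidden_eval p (\col_j g j x) k 0).
Proof.
elim: ls => [|l1 ls IH] l0 p g Hg k /=.
  have -> : (fun x => (\col_j g j x) k 0) = g k by apply: funext => x; rewrite mxE.
  exact: Hg.
pose g' := fun (k : 'I_l1) (x : 'rV[R]_d) =>
  ReCU (\sum_j p.1.1 k j * g j x + p.1.2 k 0).
have -> : (fun x => hidden_eval p.2 (map_mx (@ReCU R) (p.1.1 *m \col_j g j x + p.1.2)) k 0)
   = (fun x => hidden_eval p.2 (\col_j g' j x) k 0).
  apply: funext => x; congr (hidden_eval _ _ _ _).
  by apply/matrixP => a b; rewrite !mxE (ord1 b) /g'; congr (ReCU (_ + _));
     apply: eq_bigr => j _; rewrite mxE.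
apply: IH => j; rewrite /g'; apply: C2_recu; apply: C2_add; last exact: C2_cst.
by apply: C2_sum => j'; apply: C2_scale.
Qed.

Lemma C2_realize (R : realType) d hs (N : recu_net R d hs) : C2 (realize N).
Proof.
have -> : realize N = fun x => \sum_k net_WL N 0 k *
     hidden_eval (net_hidden N) (\col_j (fun y : 'rV[R]_d => y 0 j) x) k 0 + net_BL N 0 0.
  apply: funext => x; rewrite /realize.
  have -> : x^T = \col_j (fun y : 'rV[R]_d => y 0 j) x.
    by apply/matrixP => a b; rewrite !mxE (ord1 b).
  by rewrite !mxE; congr (_ + _); apply: eq_bigr => k _; rewrite !mxE.
apply: C2_add; last exact: C2_cst.
apply: C2_sum => k; apply: C2_scale; apply: C2_hidden => j; exact: C2_coord.
Qed.

Lemma line_is_derive {R : realType} d (f : 'rV[R]_d -> R) (z y : 'rV[R]_d) (s : R) :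
  (forall x, differentiable f x) ->
  is_derive s 1 (fun t : R => f (z + t *: y)) (\sum_i y 0 i * partial i f (z + s *: y)).
Proof.
move=> df.
set w := z + s *: y.
have E : (fun h : R => h^-1 *: (((fun t : R => f (z + t *: y)) \o shift s) (h *: 1)
            - (fun t : R => f (z + t *: y)) s))
       = (fun h : R => h^-1 *: ((f \o shift w) (h *: y) - f w)).
  apply: funext => h; rewrite /= /shift /w.
  by rewrite [h *: 1]mulr1 scalerDl addrCA.
have dv : derivable f w y by exact: diff_derivable.
have dG : derivable (fun t : R => f (z + t *: y)) s 1 by rewrite /derivable E.
have DG : 'D_1 (fun t : R => f (z + t *: y)) s = 'D_y f w by rewrite /derive E.
split; first exact: dG.
rewrite DG (deriveE _ (df w)).
rewrite {1}(row_sum_delta y) raddf_sum; apply: eq_bigr => i _.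
have L := linearZ_LR ('d f w) (y 0 i) (delta_mx 0 i). apply: (eq_trans L). by rewrite /partial (deriveE _ (df w)).
Qed.

Lemma quad_is_derive {R : realType} (c s : R) :
  is_derive s 1 (fun t : R => c * t ^+ 2) (2 * c * s).
Proof.
apply: (@quad_deriv _ _ _ _ `|c|) => h _.
have -> : c * (s + h) ^+ 2 - c * s ^+ 2 - 2 * c * s * h = c * h ^+ 2 by ring.
by rewrite normrM (ger0_norm (sqr_ge0 h)).
Qed.

Lemma lin_is_derive {R : realType} (c s : R) :
  is_derive s 1 (fun t : R => c * t) c.
Proof.
apply: (@quad_deriv _ _ _ _ 0) => h _.
have -> : c * (s + h) - c * s - c * h = 0 by ring.
by rewrite normr0 mul0r.
Qed.

Lemma symdiff_ge {R : realType} (g g' g'' : R -> R) (c : R) :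
  (forall s : R, is_derive s 1 g (g' s)) -> (forall s : R, is_derive s 1 g' (g'' s)) ->
  (forall s, -1 <= s <= 1 -> c <= g'' s) -> c <= g 1 + g (-1) - 2 * g 0.
Proof.
move=> d1 d2 hc.
pose h := fun t : R => g t - (c / 2) * t ^+ 2.
pose h' := fun t : R => g' t - c * t.
have dh (s : R) : is_derive s 1 h (h' s).
  have H := is_deriveB (d1 s) (quad_is_derive (c / 2) s).
  have -> : h' s = g' s - 2 * (c / 2) * s by rewrite /h'; congr (_ - _); field.
  exact: H.
have dh' (s : R) : is_derive s 1 h' (g'' s - c).
  exact: (is_deriveB (d2 s) (lin_is_derive c s)).
have conth (f : R -> R) (df : R -> R) (a b : R) : (forall s : R, is_derive s 1 f (df s)) ->
    {within `[a, b], continuous f}.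
  move=> H; apply: derivable_within_continuous => x _.
  exact: (@ex_derive _ _ _ _ _ _ _ (H x)).
have mono a b : -1 <= a -> a < b -> b <= 1 -> h' a <= h' b.
  move=> ha ab hb.
  have [xi xiab E] := MVT ab (fun x _ => dh' x) (conth _ _ a b dh').
  rewrite -subr_ge0 E; apply: mulr_ge0; last by rewrite subr_ge0 ltW.
  rewrite subr_ge0; apply: hc; move: xiab; rewrite in_itv /= => /andP[h1 h2].
  by rewrite (le_trans ha (ltW h1)) (le_trans (ltW h2) hb).
have [x1 x1i E1] := MVT ltr01 (fun x _ => dh x) (conth _ _ 0 1 dh).
have [x2 x2i E2] := MVT (ltrN10 R) (fun x _ => dh x) (conth _ _ (-1) 0 dh).
move: x1i x2i; rewrite !in_itv /= => /andP[a1 b1] /andP[a2 b2].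
have : h' x2 <= h' x1 by apply: mono => //; [exact: ltW | exact: lt_trans b2 a1 | exact: ltW].
move: E1 E2; rewrite /h /= => E1 E2.
lra.
Qed.

Lemma is_derive_sumfun {R : realType} n (F : 'I_n -> R -> R) (dF : 'I_n -> R) (s : R) :
  (forall i, is_derive s 1 (F i) (dF i)) ->
  is_derive s 1 (fun t => \sum_(i < n) F i t) (\sum_(i < n) dF i).
Proof.
elim: n F dF => [|n IH] F dF H.
  have -> : (fun t => \sum_(i < 0) F i t) = cst 0 by apply: funext => t; rewrite big_ord0.
  by rewrite big_ord0; exact: is_derive_cst.
have -> : (fun t => \sum_(i < n.+1) F i t) =
   (fun t => \sum_(i < n) F (widen_ord (leqnSn n) i) t) + F ord_max.
  by apply: funext => t; rewrite big_ord_recr.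
rewrite big_ord_recr /=.
have H1 := IH (fun i => F (widen_ord (leqnSn n) i)) (fun i => dF (widen_ord (leqnSn n) i))
  (fun i => H _).
exact: (is_deriveD H1 (H ord_max)).
Qed.

Lemma is_derive_scal {R : realType} (k : R) (F : R -> R) (dF s : R) :
  is_derive s 1 F dF -> is_derive s 1 (fun t => k * F t) (k * dF).
Proof. by move=> H; have := is_deriveZ k H. Qed.

Definition Qf {R : realType} {d} (f : 'rV[R]_d -> R) (z a : 'rV[R]_d) : R :=
  \sum_i a 0 i * \sum_j a 0 j * partial2 i j f z.

Lemma second_deriv {R : realType} d (f : 'rV[R]_d -> R) (z y : 'rV[R]_d) (s : R) :
  C2 f ->
  is_derive s 1 (fun t : R => \sum_i y 0 i * partial i f (z + t *: y)) (Qf f (z + s *: y) y).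
Proof.
move=> [f1 f2].
rewrite /Qf.
apply: (@is_derive_sumfun R d (fun i t => y 0 i * partial i f (z + t *: y))
  (fun i => y 0 i * \sum_j y 0 j * partial2 i j f (z + s *: y))) => i.
apply: is_derive_scal.
exact: (line_is_derive _ (partial i f) z y s (f2 i)).
Qed.

Lemma mid_plus {R : realType} d (u u' : 'rV[R]_d) :
  2^-1 *: (u + u') + 2^-1 *: (u' - u) = u'.
Proof. by apply/matrixP => a b; rewrite !mxE; field. Qed.

Lemma mid_minus {R : realType} d (u u' : 'rV[R]_d) :
  2^-1 *: (u + u') + (-1) *: (2^-1 *: (u' - u)) = u.
Proof. by apply/matrixP => a b; rewrite !mxE; field. Qed.

Lemma symQ_ge {R : realType} d (f : 'rV[R]_d -> R) (u u' : 'rV[R]_d) (c : R) :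
  C2 f ->
  (forall s, -1 <= s <= 1 ->
     c <= Qf f (2^-1 *: (u + u') + s *: (2^-1 *: (u' - u))) (2^-1 *: (u' - u))) ->
  c <= f u' + f u - 2 * f (2^-1 *: (u + u')).
Proof.
move=> Cf H.
set m := 2^-1 *: (u + u'); set y := 2^-1 *: (u' - u).
have := @symdiff_ge R (fun t => f (m + t *: y)) (fun t => \sum_i y 0 i * partial i f (m + t *: y))
  (fun t => Qf f (m + t *: y) y) c.
rewrite scale1r /m /y mid_plus mid_minus scale0r addr0.
apply => //.
- by move=> s; apply: line_is_derive; case: Cf.
- by move=> s; apply: second_deriv.
Qed.

Lemma symQ_le {R : realType} d (f : 'rV[R]_d -> R) (u u' : 'rV[R]_d) (C : R) :
  C2 f ->
  (forall s, -1 <= s <= 1 ->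
     Qf f (2^-1 *: (u + u') + s *: (2^-1 *: (u' - u))) (2^-1 *: (u' - u)) <= C) ->
  f u' + f u - 2 * f (2^-1 *: (u + u')) <= C.
Proof.
move=> Cf H.
set m := 2^-1 *: (u + u'); set y := 2^-1 *: (u' - u).
have := @symdiff_ge R (fun t => - f (m + t *: y))
  (fun t => - \sum_i y 0 i * partial i f (m + t *: y))
  (fun t => - Qf f (m + t *: y) y) (- C).
rewrite scale1r /m /y mid_plus mid_minus scale0r addr0.
have K : forall a b, - C <= a -> b = - a -> b <= C by move=> a b h ->; lra.
move=> HH; apply: (K _ _ (HH _ _ _)).
- by move=> s; apply: is_deriveN; apply: line_is_derive; case: Cf.
- by move=> s; apply: is_deriveN; apply: second_deriv.
- by move=> s hs; rewrite lerN2; exact: H.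
- by ring.
Qed.

Lemma eucl2_ge0 {R : realType} d (x : 'rV[R]_d) : 0 <= eucl2 x.
Proof. by apply: sumr_ge0 => i _; exact: sqr_ge0. Qed.

Lemma eucl2_gt0 {R : realType} d (x : 'rV[R]_d) : x != 0 -> 0 < eucl2 x.
Proof.
move=> x0.
case/boolP: [exists i, x 0 i != 0] => [/existsP [i hi]|].
  rewrite /eucl2 (bigD1 i) //=.
  have h1 : 0 < x 0 i ^+ 2 by rewrite lt0r sqr_ge0 andbT sqrf_eq0.
  have h2 : 0 <= \sum_(j < d | j != i) x 0 j ^+ 2 by apply: sumr_ge0 => j _; exact: sqr_ge0.
  lra.
move=> /existsPn H; move: x0; have -> : x = 0.
  by apply/matrixP => a b; rewrite (ord1 a) mxE; apply/eqP; have := H b; rewrite negbK.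
by rewrite eqxx.
Qed.

Lemma eucl_gt0 {R : realType} d (x : 'rV[R]_d) : x != 0 -> 0 < eucl x.
Proof. by move=> x0; rewrite /eucl sqrtr_gt0; exact: eucl2_gt0. Qed.

Lemma cube0 {R : realType} d : cube (0 : 'rV[R]_d).
Proof. by move=> i; rewrite mxE lexx ler01. Qed.

Lemma C21_bounds {R : realType} d (f : 'rV[R]_d -> R) (Ht : R) :
  (C21norm f <= Ht%:E)%E ->
  (forall x i j, cube x -> `|partial2 i j f x| <= Ht) /\
  (forall x y i j, cube x -> cube y ->
     `|partial2 i j f x - partial2 i j f y| <= Ht * eucl (x - y)).
Proof.
rewrite /C21norm => H.
have S2ge0 : (0 <= C21lip f)%E.
  by apply: ereal_sup_ubound; exists 0 => //; left.
have S1ge0 : (0 <= C2sup f)%E.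
  apply: (@le_trans _ _ (`|f 0|)%:E); first by rewrite lee_fin.
  apply: ereal_sup_ubound; exists `|f 0| => //; exists 0; split; first exact: cube0.
  by left.
have S1 : (C2sup f <= Ht%:E)%E by apply: le_trans H; exact: leeDl.
have S2 : (C21lip f <= Ht%:E)%E by apply: le_trans H; exact: leeDr.
split.
  move=> x i j cx; rewrite -lee_fin; apply: le_trans S1.
  apply: ereal_sup_ubound; exists `|partial2 i j f x| => //.
  by exists x; split => //; right; right; exists i, j.
move=> x y i j cx cy.
case/boolP: (x == y) => [/eqP ->|xy].
  by rewrite subrr normr0 /eucl /eucl2 big1 ?sqrtr0 ?mulr0 // => k _; rewrite !mxE subrr expr2 mulr0.
have ep : 0 < eucl (x - y) by apply: eucl_gt0; rewrite subr_eq0.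
rewrite -ler_pdivrMr // -lee_fin; apply: le_trans S2.
apply: ereal_sup_ubound; exists (`|partial2 i j f x - partial2 i j f y| / eucl (x - y)) => //.
by right; exists x, y, i, j; split.
Qed.

Lemma sum_le_const {R : realType} n (F : 'I_n -> R) (c : R) :
  (forall i, F i <= c) -> \sum_(i < n) F i <= n%:R * c.
Proof.
move=> H; apply: (le_trans (ler_sum _ (fun i _ => H i))).
by rewrite sumr_const card_ord mulr_natl.
Qed.

Lemma abs_sum_le {R : realType} n (F : 'I_n -> R) (c : R) :
  (forall i, `|F i| <= c) -> `|\sum_(i < n) F i| <= n%:R * c.
Proof.
move=> H; apply: (le_trans (ler_norm_sum _ _ _)); exact: sum_le_const.
Qed.

Lemma sq_le {R : realType} (a s : R) : `|a| <= s -> a ^+ 2 <= s ^+ 2.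
Proof.
move=> h; rewrite -(real_normK (num_real a)).
have := normr_ge0 a; nra.
Qed.

Lemma eucl_le {R : realType} d (x : 'rV[R]_d) (s : R) :
  (forall i, `|x 0 i| <= s) -> eucl x <= d%:R * s.
Proof.
move=> H.
have e2 : eucl2 x <= d%:R * s ^+ 2 by apply: sum_le_const => i; exact: sq_le.
have eg : 0 <= eucl x by exact: sqrtr_ge0.
have ee : eucl x ^+ 2 = eucl2 x by rewrite sqr_sqrtr // eucl2_ge0.
case: d x H e2 eg ee => [|n] x H e2 eg ee.
  by rewrite mul0r; move: e2; rewrite mul0r => e2; nra.
have s0 : 0 <= s by exact: le_trans (normr_ge0 _) (H ord0).
have n1 : 1 <= n.+1%:R :> R by rewrite ler1n.
have : 0 <= n.+1%:R * s by rewrite mulr_ge0.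
have : n.+1%:R * s ^+ 2 <= (n.+1%:R * s) ^+ 2 :> R.
  rewrite exprMn; apply: ler_wpM2r; first exact: sqr_ge0.
  by rewrite expr2 ler_peMr // ler_wpDr.
nra.
Qed.

Lemma Qf_double {R : realType} d (f : 'rV[R]_d -> R) z a :
  Qf f z a = \sum_i \sum_j (a 0 i * a 0 j) * partial2 i j f z.
Proof.
rewrite /Qf; apply: eq_bigr => i _; rewrite big_distrr /=; apply: eq_bigr => j _.
by rewrite mulrA.
Qed.

Lemma Qdiff {R : realType} d (f : 'rV[R]_d -> R) (Hb : R) (z z' a b : 'rV[R]_d) (A eps sig : R) :
  (forall x i j, cube x -> `|partial2 i j f x| <= Hb) ->
  (forall x y i j, cube x -> cube y ->
     `|partial2 i j f x - partial2 i j f y| <= Hb * eucl (x - y)) ->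
  cube z -> cube z' ->
  (forall i, `|a 0 i| <= A) -> (forall i, `|b 0 i| <= A) ->
  (forall i, `|a 0 i - b 0 i| <= eps) -> (forall i, `|z 0 i - z' 0 i| <= sig) ->
  `|Qf f z a - Qf f z' b| <=
     d%:R * (d%:R * (A ^+ 2 * (Hb * (d%:R * sig)) + 2 * A * eps * Hb)).
Proof.
move=> Hs Hl cz cz' ha hb hab hz.
rewrite !Qf_double -sumrB; apply: abs_sum_le => i.
rewrite -sumrB; apply: abs_sum_le => j.
have Hb0 : 0 <= Hb by exact: le_trans (normr_ge0 _) (Hs z i j cz).
have A0 : 0 <= A by exact: le_trans (normr_ge0 _) (ha i).
have e1 : `|partial2 i j f z - partial2 i j f z'| <= Hb * (d%:R * sig).
  apply: (le_trans (Hl z z' i j cz cz')); apply: ler_wpM2l => //.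
  by apply: eucl_le => k; rewrite !mxE.
have e2 : `|partial2 i j f z'| <= Hb by exact: Hs.
have e3 : `|a 0 i * a 0 j - b 0 i * b 0 j| <= 2 * A * eps.
  have -> : a 0 i * a 0 j - b 0 i * b 0 j
    = a 0 i * (a 0 j - b 0 j) + (a 0 i - b 0 i) * b 0 j by ring.
  apply: (le_trans (ler_normD _ _)); rewrite !normrM.
  have := ha i; have := hb j; have := hab i; have := hab j.
  have := normr_ge0 (a 0 i); have := normr_ge0 (b 0 j);
  have := normr_ge0 (a 0 i - b 0 i); have := normr_ge0 (a 0 j - b 0 j).
  nra.
have -> : a 0 i * a 0 j * partial2 i j f z - b 0 i * b 0 j * partial2 i j f z'
  = (a 0 i * a 0 j) * (partial2 i j f z - partial2 i j f z')
    + (a 0 i * a 0 j - b 0 i * b 0 j) * partial2 i j f z' by ring.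
apply: (le_trans (ler_normD _ _)); rewrite !normrM; apply: lerD.
  apply: ler_pM => //.
  have := ha i; have := ha j; have := normr_ge0 (a 0 i); have := normr_ge0 (a 0 j); nra.
by apply: ler_pM.
Qed.

Lemma eucl2_diff {R : realType} d (a b : 'rV[R]_d) (A eps : R) :
  (forall i, `|a 0 i| <= A) -> (forall i, `|b 0 i| <= A) ->
  (forall i, `|a 0 i - b 0 i| <= eps) ->
  `|eucl2 a - eucl2 b| <= d%:R * (2 * A * eps).
Proof.
move=> ha hb hab; rewrite /eucl2 -sumrB; apply: abs_sum_le => i.
have -> : a 0 i ^+ 2 - b 0 i ^+ 2 = (a 0 i - b 0 i) * (a 0 i + b 0 i) by ring.
rewrite normrM.
have h1 : `|a 0 i + b 0 i| <= 2 * A.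
  apply: (le_trans (ler_normD _ _)); have := ha i; have := hb i; lra.
have := hab i; have := normr_ge0 (a 0 i - b 0 i); have := normr_ge0 (a 0 i + b 0 i).
nra.
Qed.

Lemma int_ge_box {R : realType} (f : R -> \bar R) (a b c : R) :
  0 <= a -> a < b -> b <= 1 -> 0 <= c -> (forall t, (0 <= f t)%E) ->
  (forall t, a <= t <= b -> (c%:E <= f t)%E) ->
  ((c * (b - a))%:E <= \int[@lebesgue_measure R]_(t in `[0%R, 1%R]) f t)%E.
Proof.
move=> a0 ab b1 c0 f0 fc.
have -> : (c * (b - a))%:E = (\int[@lebesgue_measure R]_(t in `[a, b]) (cst c%:E) t)%E.
  rewrite integral_cst /=; last exact: measurable_itv.
  by rewrite lebesgue_measure_itv /= lte_fin ab -EFinD EFinM.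
rewrite ge0_integralE; last by move=> x _ /=; rewrite lee_fin.
rewrite ge0_integralE; last by move=> x _; exact: f0.
apply: ereal_sup_le => _ [h hh <-]; exists h => //= x.
apply: (le_trans (hh x)); rewrite /patch.
case: ifPn => [xab|_]; last by case: ifPn.
have xab' : a <= x <= b by move: xab; rewrite inE /= in_itv.
have x01 : x \in `[0%R, 1%R] by rewrite inE /= in_itv /=; move: xab'; case/andP => h1 h2;
  rewrite (le_trans a0 h1) (le_trans h2 b1).
by rewrite x01; exact: fc.
Qed.

Lemma cube_int_ge0 {R : realType} n (F : 'rV[R]_n -> \bar R) :
  (forall x, (0 <= F x)%E) -> (0 <= cube_int F)%E.
Proof.
elim: n F => [|n IH] F F0 /=; first exact: F0.
by apply: integral_ge0 => t _; apply: IH => v; exact: F0.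
Qed.

Lemma row_mx_at0 {R : realType} n (t : R) (v : 'rV[R]_n) :
  (row_mx (\row_(_ < 1) t) v : 'rV[R]_n.+1) 0 ord0 = t.
Proof.
have -> : (ord0 : 'I_n.+1) = lshift n (0 : 'I_1) by apply: val_inj.
have := row_mxEl (\row_(_ < 1) t) v 0 (0 : 'I_1); rewrite mxE => H; exact: H.
Qed.

Lemma row_mx_atS {R : realType} n (t : R) (v : 'rV[R]_n) (j : 'I_n) :
  (row_mx (\row_(_ < 1) t) v : 'rV[R]_n.+1) 0 (lift ord0 j) = v 0 j.
Proof.
have -> : (lift ord0 j : 'I_n.+1) = rshift 1 j by apply: val_inj.
have := row_mxEr (\row_(_ < 1) t) v 0 j => H; exact: H.
Qed.

Lemma cube_int_box {R : realType} n (F : 'rV[R]_n -> \bar R) (p : 'rV[R]_n) (del c : R) :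
  0 < del -> 0 <= c -> (forall i, del <= p 0 i <= 1 - del) ->
  (forall x, (0 <= F x)%E) ->
  (forall x : 'rV[R]_n, (forall i, `|x 0 i - p 0 i| <= del) -> (c%:E <= F x)%E) ->
  ((c * (2 * del) ^+ n)%:E <= cube_int F)%E.
Proof.
elim: n F p c => [|n IH] F p c d0 c0 hp F0 HF /=.
  by rewrite expr0 mulr1; apply: HF => -[].
have hp0 := hp ord0.
have -> : c * (2 * del) ^+ n.+1 = (c * (2 * del) ^+ n) * ((p 0 ord0 + del) - (p 0 ord0 - del)).
  by rewrite exprSr; ring.
apply: int_ge_box; [lra | lra | lra | by rewrite mulr_ge0 // exprn_ge0 // mulr_ge0 // ltW |
  by move=> t; apply: cube_int_ge0 => v; exact: F0 |].
move=> t ht.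
apply: (IH _ (\row_(j < n) p 0 (lift ord0 j))) => //.
- by move=> j; rewrite mxE; exact: hp.
move=> v hv; apply: HF => i.
case: (unliftP ord0 i) => [j ->|->].
  by rewrite row_mx_atS; have := hv j; rewrite mxE.
rewrite row_mx_at0 ler_norml; lra.
Qed.

Lemma consts_ok {R : realType} (eta kap D Hb r th : R) :
  0 < eta -> eta <= 1 -> 0 <= kap -> 0 <= D -> 0 <= Hb ->
  r = eta / (80 * (D ^+ 3 * Hb + 1)) ->
  th = eta / (32 * (kap * D + D ^+ 2 * Hb + 1)) ->
  D * (D * ((r + th * r) ^+ 2 * (Hb * (D * (2 * r + r + 2 * (th * r))))
     + 2 * (r + th * r) * (th * r) * Hb)) / 2
    + kap * D * (2 * (r + th * r) * (th * r)) / 2 <= eta * r ^+ 2 / 4.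
Proof.
move=> e0 e1 k0 D0 H0 hr ht.
set P := D ^+ 3 * Hb; set S := kap * D + D ^+ 2 * Hb.
have P0 : 0 <= P by rewrite mulr_ge0 // exprn_ge0.
have S0 : 0 <= S by rewrite addr_ge0 // mulr_ge0 // ?exprn_ge0.
have rE : r * (80 * (P + 1)) = eta by rewrite hr divfK // gt_eqF // mulr_gt0 // ltr_wpDl.
have tE : th * (32 * (S + 1)) = eta by rewrite ht divfK // gt_eqF // mulr_gt0 // ltr_wpDl.
have r0 : 0 < r by rewrite hr divr_gt0 // mulr_gt0 // ltr_wpDl.
have t0 : 0 < th by rewrite ht divr_gt0 // mulr_gt0 // ltr_wpDl.
have t1 : th <= 1 by nra.
have LE : D * (D * ((r + th * r) ^+ 2 * (Hb * (D * (2 * r + r + 2 * (th * r))))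
     + 2 * (r + th * r) * (th * r) * Hb)) / 2
    + kap * D * (2 * (r + th * r) * (th * r)) / 2
  = r ^+ 2 * (P * r * ((1 + th) ^+ 2 * (3 + 2 * th)) / 2 + S * ((1 + th) * th)).
  by rewrite /P /S; field.
rewrite LE.
have h1 : (1 + th) ^+ 2 * (3 + 2 * th) <= 20.
  have : (1 + th) ^+ 2 <= 4 by nra.
  have : 0 <= (1 + th) ^+ 2 by exact: sqr_ge0.
  nra.
have h2 : P * r <= eta / 80 by rewrite ler_pdivlMr //; nra.
have h3 : P * r * ((1 + th) ^+ 2 * (3 + 2 * th)) / 2 <= eta / 8.
  have : 0 <= P * r by rewrite mulr_ge0 // ltW.
  have : 0 <= (1 + th) ^+ 2 * (3 + 2 * th) by rewrite mulr_ge0 ?sqr_ge0 //; lra.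
  nra.
have h4 : S * th <= eta / 32 by rewrite ler_pdivlMr //; nra.
have h5 : S * ((1 + th) * th) <= eta / 16.
  have : 0 <= S * th by rewrite mulr_ge0 // ltW.
  nra.
have : 0 < r ^+ 2 by rewrite exprn_gt0.
nra.
Qed.

Lemma Qf_scale {R : realType} d (f : 'rV[R]_d -> R) z (a : 'rV[R]_d) (l : R) :
  Qf f z (l *: a) = l ^+ 2 * Qf f z a.
Proof.
rewrite !Qf_double mulr_sumr; apply: eq_bigr => i _.
rewrite mulr_sumr; apply: eq_bigr => j _; rewrite !mxE; ring.
Qed.

Lemma Qf_zero {R : realType} d (f : 'rV[R]_d -> R) z : Qf f z 0 = 0.
Proof. by rewrite /Qf big1 // => i _; rewrite mxE mul0r. Qed.

Lemma eucl2_scale {R : realType} d (a : 'rV[R]_d) (l : R) :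
  eucl2 (l *: a) = l ^+ 2 * eucl2 a.
Proof. rewrite /eucl2 mulr_sumr; apply: eq_bigr => i _; rewrite !mxE; ring. Qed.

Lemma eucl2_half {R : realType} d (u u' : 'rV[R]_d) :
  eucl2 (u - u') = 4 * eucl2 (2^-1 *: (u' - u)).
Proof. rewrite /eucl2 mulr_sumr; apply: eq_bigr => i _; rewrite !mxE; by field. Qed.

Lemma coord_le_eucl2 {R : realType} d (a : 'rV[R]_d) i : a 0 i ^+ 2 <= eucl2 a.
Proof.
rewrite /eucl2 (bigD1 i) //=.
have : 0 <= \sum_(j < d | j != i) a 0 j ^+ 2 by apply: sumr_ge0 => j _; exact: sqr_ge0.
lra.
Qed.

Lemma conv_in01 {R : realType} (a b s : R) : 0 <= a <= 1 -> 0 <= b <= 1 -> -1 <= s <= 1 ->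
  0 <= 2^-1 * (a + b) + s * (2^-1 * (b - a)) <= 1.
Proof. move=> /andP[a1 a2] /andP[b1 b2] /andP[s1 s2]; apply/andP; split; nra. Qed.

Lemma abs_mul_le1 {R : realType} (s y c : R) : `|s| <= 1 -> `|y| <= c -> `|s * y| <= c.
Proof.
move=> hs hy; rewrite normrM; have := normr_ge0 s; have := normr_ge0 y; nra.
Qed.

Lemma le1_of_eq {R : realType} (t a S k : R) : 0 < t -> 0 <= S -> a <= 1 -> 1 <= k ->
  t * (k * (S + 1)) = a -> t <= 1.
Proof. move=> t0 S0 a1 k1 E; apply: le_trans a1; rewrite -E; apply: ler_peMr; [exact: ltW | nra]. Qed.

Lemma pp_bounds {R : realType} (p r : R) : 0 <= p <= 1 -> 0 < r -> 4 * r <= 1 ->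
  2 * r <= p + 4 * r * (2^-1 - p) <= 1 - 2 * r /\ `|p + 4 * r * (2^-1 - p) - p| <= 2 * r.
Proof.
move=> /andP[a1 a2] r0 r1; split; first by apply/andP; split; nra.
rewrite ler_norml; apply/andP; split; nra.
Qed.

Lemma shift_bounds {R : realType} (q y r del : R) : 2 * r <= q <= 1 - 2 * r -> `|y| <= r ->
  del <= r -> (del <= q - y <= 1 - del) /\ (del <= q + y <= 1 - del).
Proof.
rewrite ler_norml => /andP[a1 a2] /andP[b1 b2] h; split; apply/andP; split; lra.
Qed.

Lemma box_in01 {R : realType} (b t del : R) : del <= b <= 1 - del -> `|t - b| <= del ->
  0 <= t <= 1.
Proof. rewrite ler_norml => /andP[a1 a2] /andP[b1 b2]; apply/andP; split; lra. Qed.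

Lemma half_diff_bound {R : realType} (x x' q y del : R) :
  `|x - (q - y)| <= del -> `|x' - (q + y)| <= del -> `|2^-1 * (x' - x) - y| <= del.
Proof.
rewrite !ler_norml => /andP[a1 a2] /andP[b1 b2]; apply/andP; split; lra.
Qed.

Lemma add_bound {R : realType} (a b r del : R) : `|a - b| <= del -> `|b| <= r -> `|a| <= r + del.
Proof. rewrite !ler_norml => /andP[a1 a2] /andP[b1 b2]; apply/andP; split; lra. Qed.

Lemma z_bound {R : realType} (x x' q y p sy r del : R) :
  `|x - (q - y)| <= del -> `|x' - (q + y)| <= del -> `|q - p| <= 2 * r ->
  `|sy| <= r + del -> `|2^-1 * (x + x') + sy - p| <= 2 * r + r + 2 * del.
Proof.
rewrite !ler_norml => /andP[a1 a2] /andP[b1 b2] /andP[c1 c2] /andP[d1 d2].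
apply/andP; split; lra.
Qed.

Lemma abs_le_add {R : realType} (a b e : R) : `|a - b| <= e -> a <= b + e.
Proof. rewrite ler_norml => /andP[a1 a2]; lra. Qed.

Lemma final_ineq {R : realType} (fx fx' fm Q Eb e1 exx kap eta r del D : R) :
  0 <= kap ->
  fx' + fx - 2 * fm <= Q + Eb ->
  Q < (kap - eta) * r ^+ 2 ->
  `|e1 - r ^+ 2| <= D * (2 * (r + del) * del) ->
  exx = 4 * e1 ->
  Eb / 2 + kap * D * (2 * (r + del) * del) / 2 <= eta * r ^+ 2 / 4 ->
  eta * r ^+ 2 / 4 <= fm - (fx + fx') / 2 + kap / 8 * exx.
Proof.
move=> k0 s1 q1; rewrite ler_norml => /andP[a1 a2] -> co.
have : kap * (r ^+ 2 - D * (2 * (r + del) * del)) <= kap * e1.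
  by apply: ler_wpM2l => //; lra.
lra.
Qed.

Arguments pp_bounds {R p r}.
Arguments shift_bounds {R q y r del}.
Arguments box_in01 {R b t del}.
Arguments half_diff_bound {R x x' q y del}.
Arguments add_bound {R a b r del}.
Arguments z_bound {R x x' q y p sy r del}.
Arguments abs_le_add {R a b e}.
Arguments final_ineq {R fx fx' fm Q Eb e1 exx kap eta r del D}.
Arguments conv_in01 {R a b s}.
Arguments abs_mul_le1 {R s y c}.

Theorem proposition6 (R : realType) (d : nat) (hs : seq nat) (M eps Ht : R)
    (phi_eps : recu_net R d hs) :
  1 < M -> 0 < eps ->
  (forall x : 'rV[R]_d, cube x ->
     loewner_le ((2 * M)^-1 *: 1%:M) (hess (realize phi_eps) x) /\
     loewner_le (hess (realize phi_eps) x) ((2 * M) *: 1%:M)) ->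
  (C21norm (realize phi_eps) <= Ht%:E)%E ->
  forall eta : R, 0 < eta < M^-1 / 2 ->
  exists zeta : R, 0 < zeta /\
    forall phi : recu_net R d hs,
      (C21norm (realize phi) <= Ht%:E)%E ->
      ~ strongly_convex (M^-1 / 2 - eta) (realize phi) ->
      (zeta%:E <= Pkappa (M^-1 / 2) (realize phi))%E.
Proof.
move=> hM _ _ _ eta /andP[e0 ek].
have M0 : 0 < M by lra.
have Mi : M^-1 < 1 by rewrite invf_lt1.
have Mi0 : 0 < M^-1 by rewrite invr_gt0.
set kap := M^-1 / 2.
have kap0 : 0 < kap by rewrite /kap; lra.
have e1 : eta <= 1 by move: ek; rewrite -/kap /kap; lra.
set Hb := `|Ht|.
have Hb0 : 0 <= Hb by exact: normr_ge0.
have D0 : 0 <= d%:R :> R by exact: ler0n.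
set r := eta / (80 * (d%:R ^+ 3 * Hb + 1)).
set th := eta / (32 * (kap * d%:R + d%:R ^+ 2 * Hb + 1)).
set del := th * r.
have P0 : 0 <= d%:R ^+ 3 * Hb by rewrite mulr_ge0 // exprn_ge0.
have S0 : 0 <= kap * d%:R + d%:R ^+ 2 * Hb by rewrite addr_ge0 // mulr_ge0 // ?exprn_ge0 // ltW.
have r0 : 0 < r by rewrite divr_gt0 // mulr_gt0 // ltr_wpDl.
have t0 : 0 < th by rewrite divr_gt0 // mulr_gt0 // ltr_wpDl.
have rE : r * (80 * (d%:R ^+ 3 * Hb + 1)) = eta by rewrite divfK // gt_eqF // mulr_gt0 // ltr_wpDl.
have tE : th * (32 * (kap * d%:R + d%:R ^+ 2 * Hb + 1)) = eta
  by rewrite divfK // gt_eqF // mulr_gt0 // ltr_wpDl.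
have t1 : th <= 1.
  have := @le1_of_eq R th eta (kap * d%:R + d%:R ^+ 2 * Hb) 32 t0 S0 e1.
  by apply; [rewrite ler1n | exact: tE].
have rs : 4 * r <= 1.
  have r1 : 4 * r * (20 * (d%:R ^+ 3 * Hb + 1)) = eta by rewrite -rE; ring.
  have := @le1_of_eq R (4 * r) eta (d%:R ^+ 3 * Hb) 20 _ P0 e1.
  by apply; [rewrite mulr_gt0 | rewrite ler1n | exact: r1].
have del0 : 0 < del by rewrite mulr_gt0.
have delr : del <= r by rewrite /del ler_piMl // ltW.
set c2 := eta * r ^+ 2 / 4.
have c20 : 0 <= c2 by rewrite /c2; apply: mulr_ge0; [apply: mulr_ge0; [exact: ltW|exact: sqr_ge0]|by []].
set c1 := c2 * (2 * del) ^+ d.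
have c10 : 0 <= c1 by rewrite mulr_ge0 // exprn_ge0 // mulr_ge0 // ltW.
have c2p : 0 < c2 by rewrite /c2 divr_gt0 // mulr_gt0 // exprn_gt0.
have dp : 0 < (2 * del) ^+ d by rewrite exprn_gt0 // mulr_gt0.
have c1p : 0 < c1 by rewrite /c1 mulr_gt0.
exists (c1 * (2 * del) ^+ d); split; first by rewrite mulr_gt0.
move=> phi hn hnc.
set f := realize phi.
have Cf : C2 f by exact: C2_realize.
have [Hs0 Hl0] := @C21_bounds R d f Ht hn.
have Hs : forall x i j, cube x -> `|partial2 i j f x| <= Hb.
  by move=> x i j cx; apply: le_trans (Hs0 x i j cx) _; exact: ler_norm.
have Hl : forall x y i j, cube x -> cube y ->
    `|partial2 i j f x - partial2 i j f y| <= Hb * eucl (x - y).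
  move=> x y i j cx cy; apply: le_trans (Hl0 x y i j cx cy) _.
  by apply: ler_wpM2r; [exact: sqrtr_ge0 | exact: ler_norm].
have [u [u' [cu [cu' hv]]]] : exists u u', cube u /\ cube u' /\
    (f u + f u') / 2 - (kap - eta) / 8 * eucl2 (u - u') < f (2^-1 *: (u + u')).
  apply: contrapT => H; apply: hnc => u u' cu cu'.
  rewrite leNgt; apply/negP => hlt; apply: H; by exists u, u'.
set m := 2^-1 *: (u + u') in hv *; set y0 := 2^-1 *: (u' - u).
have hsym : f u' + f u - 2 * f m < (kap - eta) * eucl2 y0.
  by move: hv; rewrite eucl2_half -/y0; lra.
have [s [hs0 hQ]] : exists s, -1 <= s <= 1 /\ Qf f (m + s *: y0) y0 < (kap - eta) * eucl2 y0.
  apply: contrapT => H.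
  have := @symQ_ge R d f u u' ((kap - eta) * eucl2 y0) Cf.
  have HH : forall s, -1 <= s <= 1 -> (kap - eta) * eucl2 y0 <= Qf f (m + s *: y0) y0.
    by move=> s hss; rewrite leNgt; apply/negP => hl; apply: H; exists s.
  by move=> /(_ HH); lra.
set p := m + s *: y0 in hQ.
have cp : cube p.
  move=> i; rewrite /p /m /y0 !mxE.
  exact: conv_in01 (cu i) (cu' i) hs0.
have y00 : y0 != 0.
  apply/negP => /eqP y0E; move: hQ; rewrite y0E Qf_zero.
  by rewrite /eucl2 big1 ?mulr0 ?ltxx // => i _; rewrite mxE expr2 mulr0.
set E0 := eucl2 y0.
have E00 : 0 < E0 by exact: (@eucl2_gt0 R d y0 y00).
have sE0 : 0 < Num.sqrt E0 by rewrite sqrtr_gt0.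
set lam := r / Num.sqrt E0.
have lam0 : 0 < lam by rewrite divr_gt0.
set ys := lam *: y0.
have ysE : eucl2 ys = r ^+ 2.
  by rewrite eucl2_scale -/E0 /lam expr_div_n sqr_sqrtr ?ltW // divfK // gt_eqF.
have ysb : forall i, `|ys 0 i| <= r.
  move=> i; rewrite mxE normrM (gtr0_norm lam0) /lam mulrAC ler_pdivrMr //.
  rewrite ler_pM2l // -sqrtr_sqr ler_sqrt; last exact: ltW.
  exact: coord_le_eucl2.
have hQs : Qf f p ys < (kap - eta) * r ^+ 2.
  rewrite Qf_scale -ysE eucl2_scale mulrCA ltr_pM2l //; last by rewrite exprn_gt0.
set rho := 4 * r.
set p' := p + rho *: (const_mx 2^-1 - p).
have p'E : forall i, p' 0 i = p 0 i + rho * (2^-1 - p 0 i) by move=> i; rewrite !mxE.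
have p'b : forall i, 2 * r <= p' 0 i <= 1 - 2 * r.
  by move=> i; rewrite p'E /rho; case: (pp_bounds (cp i) r0 rs).
have p'p : forall i, `|p' 0 i - p 0 i| <= 2 * r.
  by move=> i; rewrite p'E /rho; case: (pp_bounds (cp i) r0 rs).
set b1 := p' - ys; set b2 := p' + ys.
have b1E : forall i, b1 0 i = p' 0 i - ys 0 i.
  by move=> i; rewrite /b1 [LHS]mxE [(- ys) 0 i]mxE.
have b2E : forall i, b2 0 i = p' 0 i + ys 0 i by move=> i; rewrite /b2 [LHS]mxE.
have hb1 : forall i, del <= b1 0 i <= 1 - del.
  by move=> i; rewrite b1E; case: (shift_bounds (p'b i) (ysb i) delr).
have hb2 : forall i, del <= b2 0 i <= 1 - del.
  by move=> i; rewrite b2E; case: (shift_bounds (p'b i) (ysb i) delr).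
have relu0 : forall z : R, (0 <= (ReLU z)%:E)%E.
  by move=> z; rewrite lee_fin /ReLU le_max lexx orbT.
rewrite /Pkappa.
apply: (@cube_int_box R d _ b1 del c1) => //.
  by move=> x; apply: cube_int_ge0 => x'; exact: relu0.
move=> x hx.
apply: (@cube_int_box R d _ b2 del c2) => //.
move=> x' hx'.
rewrite lee_fin /ReLU le_max; apply/orP; left.
have cx : cube x by move=> i; exact: box_in01 (hb1 i) (hx i).
have cx' : cube x' by move=> i; exact: box_in01 (hb2 i) (hx' i).
set m1 := 2^-1 *: (x + x'); set y1 := 2^-1 *: (x' - x).
have y1E : forall i, y1 0 i = 2^-1 * (x' 0 i - x 0 i) by move=> i; rewrite /y1 !mxE.
have d1 : forall i, `|y1 0 i - ys 0 i| <= del.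
  move=> i; rewrite y1E; have := hx i; have := hx' i; rewrite b1E b2E => h1 h2.
  exact: half_diff_bound h2 h1.
have A1 : forall i, `|y1 0 i| <= r + del by move=> i; exact: add_bound (d1 i) (ysb i).
have A2 : forall i, `|ys 0 i| <= r + del.
  by move=> i; apply: le_trans (ysb i) _; rewrite ler_wpDr // ltW.
have zc : forall s', -1 <= s' <= 1 -> cube (m1 + s' *: y1) /\
    forall i, `|(m1 + s' *: y1) 0 i - p 0 i| <= 2 * r + r + 2 * del.
  move=> s' hs'.
  have zE : forall i, (m1 + s' *: y1) 0 i = 2^-1 * (x 0 i + x' 0 i) + s' * y1 0 i.
    by move=> i; rewrite /m1 !mxE.
  split.
    move=> i; rewrite zE y1E; have := cx i; have := cx' i.
    move: hs' => /andP[s1 s2] /andP[a1 a2] /andP[a3 a4]; apply/andP; split; nra.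
  move=> i; rewrite zE.
  have sy : `|s' * y1 0 i| <= r + del.
    by apply: abs_mul_le1 (A1 i); rewrite ler_norml.
  have := hx i; have := hx' i; rewrite b1E b2E => h1 h2.
  exact: z_bound h2 h1 (p'p i) sy.
set Eb := d%:R * (d%:R * ((r + del) ^+ 2 * (Hb * (d%:R * (2 * r + r + 2 * del)))
     + 2 * (r + del) * del * Hb)).
have Qb : forall s', -1 <= s' <= 1 -> Qf f (m1 + s' *: y1) y1 <= Qf f p ys + Eb.
  move=> s' hs'; have [cz zb] := zc s' hs'.
  have := @Qdiff R d f Hb (m1 + s' *: y1) p y1 ys (r + del) del (2 * r + r + 2 * del)
    Hs Hl cz cp A1 A2 d1 zb.
  by rewrite -/Eb => /abs_le_add.
have sym2 := @symQ_le R d f x x' (Qf f p ys + Eb) Cf Qb.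
have ed := @eucl2_diff R d y1 ys (r + del) del A1 A2 d1.
have exk := @eucl2_half R d x x'.
have co := @consts_ok R eta kap d%:R Hb r th e0 e1 (ltW kap0) D0 Hb0 erefl erefl.
rewrite -/del -/Eb in co.
rewrite ysE in ed.
rewrite /c2.
exact: (final_ineq (ltW kap0) sym2 hQs ed exk co).
Qed.
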